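(* Let $\mathcal{I}=(R,U,C,\omega)$ be an instance of Valued APEP such that $C$ is $t$-wbounded. Then there exists an optimal solution $A^*$ of $\mathcal{I}$ with $|A^*|\le t$.
   Context: $U$ is a finite set of users, $R$ a finite set of resources. An authorization relation is $A\subseteq U\times R$; $A(r)=\{u:(u,r)\in A\}$, $A(u)=\{r:(u,r)\in A\}$; $A$ is complete if $A(r)\neq\emptyset$ for all $r\in R$. A weighted constraint $c$ is a function $w_c:2^{U\times R}\to\mathbb{N}$ with $w_c(A)=0$ iff $A$ satisfies $c$. A weighted user authorization function is $\omega:U\times 2^R\to\mathbb{N}$ with $\omega(u,T')\le\omega(u,T)$ whenever $T'\subseteq T$, and $\omega(u,T)=0$ if $u$ is authorized for every resource of $T$. Put $\Omega(A)=\sum_{u\in U}\omega(u,A(u))$, $w_C(A)=\sum_{c\in C}w_c(A)$ and $w(A)=\Omega(A)+w_C(A)$. An instance of Valued APEP is $(R,U,C,\omega)$ with $C$ a set of weighted constraints; an optimal solution is a complete authorization relation $A$ with $w(A)\le w(A')$ for every complete authorization relation $A'$. $C$ is $t$-wbounded if for every complete authorization relation $A$ with $|A|>t$ there is a complete authorization relation $A'\subseteq A$ with $|A'|<|A|$ and $w_C(A')\le w_C(A)$. *)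

(* Defs.v *)
From mathcomp Require Import all_boot.
Set Implicit Arguments. Unset Strict Implicit. Unset Printing Implicit Defensive.

Section APEP.
Variables (U R : finType).

Definition authrel := {set U * R}.

Definition resources_of (A : authrel) (u : U) : {set R} :=
  [set r | (u, r) \in A].

Definition complete (A : authrel) : Prop :=
  forall r : R, exists u : U, (u, r) \in A.

Definition weighted_user_auth (auth : U -> R -> bool)
  (omega : U -> {set R} -> nat) : Prop :=
  (forall u (T' T : {set R}), T' \subset T -> omega u T' <= omega u T) /\
  (forall u (T : {set R}), (forall r, r \in T -> auth u r) -> omega u T = 0).

Definition Omega (omega : U -> {set R} -> nat) (A : authrel) : nat :=
  \sum_(u : U) omega u (resources_of A u).

Definition wC (I : finType) (C : I -> authrel -> nat) (A : authrel) : nat :=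
  \sum_(c : I) C c A.

Definition wtot (I : finType) (C : I -> authrel -> nat)
  (omega : U -> {set R} -> nat) (A : authrel) : nat :=
  Omega omega A + wC C A.

Definition optimal_solution (I : finType) (C : I -> authrel -> nat)
  (omega : U -> {set R} -> nat) (A : authrel) : Prop :=
  complete A /\
  forall A' : authrel, complete A' -> wtot C omega A <= wtot C omega A'.

Definition t_wbounded (I : finType) (C : I -> authrel -> nat) (t : nat) : Prop :=
  forall A : authrel, complete A -> t < #|A| ->
    exists A' : authrel, [/\ complete A', A' \subset A, #|A'| < #|A| &
                            wC C A' <= wC C A].

End APEP.

(* Main.v *)
Require Import Defs.
From mathcomp Require Import all_boot.

Lemma completeP (U R : finType) (A : {set U * R}) :
  reflect (complete A) [forall r, [exists u, (u, r) \in A]].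
Proof.
apply: (iffP forallP) => H r.
  by have /existsP := H r.
by apply/existsP; apply: H.
Qed.

Theorem lemma4p4 (U R : finType) (I : finType) (C : I -> {set U * R} -> nat)
  (auth : U -> R -> bool) (omega : U -> {set R} -> nat) (t : nat) :
  weighted_user_auth auth omega ->
  (exists A : {set U * R}, complete A) ->
  t_wbounded C t ->
  exists Astar : {set U * R}, optimal_solution C omega Astar /\ #|Astar| <= t.
Proof.
move=> [mono _] [A0 cA0] wb.
pose P := fun n => [exists A : {set U * R},
   [forall r, [exists u, (u, r) \in A]] && (wtot C omega A == n)].
have exP : exists n, P n.
  exists (wtot C omega A0); apply/existsP; exists A0.
  by rewrite eqxx andbT; apply/completeP.
case: (ex_minnP exP) => n /existsP [A1 /andP [/completeP cA1 /eqP wA1]] minn.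
have minw : forall A, complete A -> n <= wtot C omega A.
  move=> A cA; apply: minn; apply/existsP; exists A.
  by rewrite eqxx andbT; apply/completeP.
pose Q := fun k => [exists A : {set U * R},
   [&& [forall r, [exists u, (u, r) \in A]], (wtot C omega A == n) & (#|A| == k)]].
have exQ : exists k, Q k.
  exists #|A1|; apply/existsP; exists A1.
  by rewrite wA1 !eqxx !andbT; apply/completeP.
case: (ex_minnP exQ) => k /existsP [A2 /and3P [/completeP cA2 /eqP wA2 /eqP kA2]] mink.
exists A2; split.
  split=> // A' cA'; rewrite wA2; exact: minw.
rewrite leqNgt; apply/negP => ht.
have [A' [cA' sub lt wle]] := wb A2 cA2 ht.
have hO : Omega omega A' <= Omega omega A2.
  apply: leq_sum => u _; apply: mono.
  apply/subsetP => r; rewrite !inE; exact: (subsetP sub).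
have hw : wtot C omega A' <= wtot C omega A2.
  by rewrite /wtot leq_add.
have ew : wtot C omega A' = n.
  by apply/eqP; rewrite eqn_leq minw // andbT -wA2.
have : k <= #|A'|.
  apply: mink; apply/existsP; exists A'.
  by rewrite ew !eqxx andbT andbT; apply/completeP.
by rewrite -kA2 leqNgt lt.
Qed.
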